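(* Let $G=(V,E)$ be a finite simple graph with directed edge set $\vec E$ (each undirected edge yields two opposite directed edges; $o(e)$, $t(e)$ are origin and terminus, $\bar e$ the reverse edge, $[e]$ the undirected edge). Let $(r_i)_{i\in V}$ be positive integers and $u_e\in\mathbb{C}^{r_{t(e)}\times r_{o(e)}}$ for $e\in\vec E$. Define $$Z_G(\boldsymbol u)=\prod_{\mathfrak p\in\mathfrak P_G}\det(I-\pi(\mathfrak p))^{-1},\qquad \pi(\mathfrak p)=u_{e_k}\cdots u_{e_1}\ \text{for }\mathfrak p=(e_1,\dots,e_k),$$ where $\mathfrak P_G$ is the set of prime cycles. Assume $I-u_eu_{\bar e}$ is invertible for every $e$. Then $$Z_G(\boldsymbol u)^{-1}=\det\big(I+\hat{\mathcal D}(\boldsymbol u)-\hat{\mathcal A}(\boldsymbol u)\big)\prod_{[e]\in E}\det(I-u_eu_{\bar e}),$$ where $\hat{\mathcal D}(\boldsymbol u),\hat{\mathcal A}(\boldsymbol u)$ are the operators on $\bigoplus_{i\in V}\mathbb{C}^{r_i}$ $$(\hat{\mathcal D}(\boldsymbol u)g)(i)=\Big(\sum_{e:t(e)=i}(I_{r_i}-u_eu_{\bar e})^{-1}u_eu_{\bar e}\Big)g(i),\qquad(\hat{\mathcal A}(\boldsymbol u)g)(i)=\sum_{e:t(e)=i}(I_{r_i}-u_eu_{\bar e})^{-1}u_e\,g(o(e)),$$ and the product over $[e]\in E$ takes one directed representative per undirected edge.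
   Context: A closed geodesic in $G$ is a sequence $(e_1,\dots,e_k)$ of directed edges with $t(e_l)=o(e_{l+1})$ and $e_{l+1}\ne\bar e_l$ for all $l\in\mathbb{Z}/k\mathbb{Z}$; it is prime if it is not the $m$-fold repetition ($m\ge2$) of a shorter closed geodesic; a prime cycle is a cyclic-permutation equivalence class of prime closed geodesics. The identity is understood as an identity of formal power series in the entries of the $u_e$ (with $Z_G(\boldsymbol u)^{-1}$ equal to $\det(I-\mathcal M)$, where $\mathcal M$ acts on $\bigoplus_{e}\mathbb{C}^{r_{t(e)}}$ by $(\mathcal Mf)(e)=\sum_{e':t(e')=o(e),\,e'\ne\bar e}u_ef(e')$). *)

(* Defs.v *)
From mathcomp Require Import all_boot all_order all_algebra.
From mathcomp Require Import complex.
From mathcomp Require Import Rstruct.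

Set Implicit Arguments.
Unset Strict Implicit.
Unset Printing Implicit Defensive.
Import GRing.Theory.
Local Open Scope ring_scope.

Definition C : numClosedFieldType := (Rdefinitions.R)[i].

(* Determinant of an operator on a finite-dimensional space with a
   finite basis indexed by the finType T, given by its matrix entries
   A x y (row x, column y) in that basis.  (Independent of the
   enumeration order of T.) *)
Definition fdet (T : finType) (A : T -> T -> C) : C :=
  \det (\matrix_(a < #|T|, b < #|T|) A (enum_val a) (enum_val b)).

(* Entry (k,l) of a matrix, addressed by natural numbers
   (0 if out of range).  Used to address a block through an index
   whose type is only propositionally equal to the block's dimension. *)
Definition mx_at (m n : nat) (A : 'M[C]_(m, n)) (k l : nat) : C :=
  match (insub k : option 'I_m), (insub l : option 'I_n) with
  | Some a, Some b => A a b
  | _, _ => 0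
  end.

(* ---- Graph data ----
   A finite simple graph on vertex set V : finType is given by an
   adjacency relation adj, symmetric and irreflexive. *)
Definition dedge (V : finType) (adj : rel V) : finType :=
  {p : V * V | adj p.1 p.2}.

Definition org (V : finType) (adj : rel V) (e : dedge adj) : V := (val e).1.
Definition term (V : finType) (adj : rel V) (e : dedge adj) : V := (val e).2.

(* The matrices u_e are given as a family u i j : 'M_(r j, r i),
   u i j being u_e for the directed edge e = (i -> j)
   (so u_e : C^{r_{t(e)} x r_{o(e)}}); values at non-adjacent pairs
   are never used.  u_{\bar e} for e = (i -> j) is u j i. *)

(* Basis of  (+)_{e directed edge} C^{r_{t(e)}}. *)
Definition Ebasis (V : finType) (adj : rel V) (r : V -> nat) : finType :=
  {e : dedge adj & 'I_(r (term e))}.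

(* Basis of  (+)_{i in V} C^{r_i}. *)
Definition Vbasis (V : finType) (r : V -> nat) : finType :=
  {i : V & 'I_(r i)}.

(* The edge operator M on (+)_e C^{r_{t(e)}}:
   (M f)(e) = sum_{e' : t(e') = o(e), e' <> \bar e} u_e f(e'). *)
Definition edgeM (V : finType) (adj : rel V) (r : V -> nat)
    (u : forall i j : V, 'M[C]_(r j, r i))
    (x y : Ebasis adj r) : C :=
  let e := tag x in let e' := tag y in
  if (term e' == org e) && (org e' != term e)
  then mx_at (u (org e) (term e)) (tagged x) (tagged y)
  else 0.

Definition Dblock (V : finType) (adj : rel V) (r : V -> nat)
    (u : forall i j : V, 'M[C]_(r j, r i)) (i : V) : 'M[C]_(r i) :=
  \sum_(j : V | adj j i)
     invmx (1%:M - u j i *m u i j) *m (u j i *m u i j).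

Definition Dhat (V : finType) (adj : rel V) (r : V -> nat)
    (u : forall i j : V, 'M[C]_(r j, r i)) (x y : Vbasis r) : C :=
  if tag x == tag y then Dblock adj u (tag x) (tagged x) (tagged_as x y) else 0.

Definition Ablock (V : finType) (adj : rel V) (r : V -> nat)
    (u : forall i j : V, 'M[C]_(r j, r i)) (i j : V) : 'M[C]_(r i, r j) :=
  if adj j i then invmx (1%:M - u j i *m u i j) *m u j i else 0.

Definition Ahat (V : finType) (adj : rel V) (r : V -> nat)
    (u : forall i j : V, 'M[C]_(r j, r i)) (x y : Vbasis r) : C :=
  Ablock adj u (tag x) (tag y) (tagged x) (tagged y).

(* Z_G(u)^{-1}, which by the paper's convention equals det(I - M). *)
Definition Zinv (V : finType) (adj : rel V) (r : V -> nat)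
    (u : forall i j : V, 'M[C]_(r j, r i)) : C :=
  fdet (fun x y : Ebasis adj r => (x == y)%:R - edgeM u x y).

(* Main.v *)
Require Import Defs.
From mathcomp Require Import all_boot all_order all_algebra.
From mathcomp Require Import complex perm.
From mathcomp Require Import Rstruct.
Set Implicit Arguments.
Unset Strict Implicit.
Unset Printing Implicit Defensive.
Import GRing.Theory.
Local Open Scope ring_scope.

Section Fdet.
Variable T : finType.
Implicit Types A : T -> T -> C.

Definition fdon (P : {pred T}) A : C :=
  \det (\matrix_(a < #|P|, b < #|P|) A (enum_val a) (enum_val b)).

Lemma fdet_fdon A : fdet A = fdon T A.
Proof. by []. Qed.

Lemma det_conj n (s : 'S_n) (M : 'M[C]_n) :
  \det (\matrix_(i, j) M (s i) (s j)) = \det M.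
Proof.
have -> : \matrix_(i, j) M (s i) (s j) = row_perm s (col_perm s M).
  by apply/matrixP => i j; rewrite !mxE.
rewrite row_permE col_permE !det_mulmx !det_perm odd_permV mulrCA mulrA.
by rewrite -mulrA -signr_addb addbb expr0 mulr1.
Qed.

Lemma det_cast n n' (E : n = n') (M : 'M[C]_n) : \det (castmx (E, E) M) = \det M.
Proof. by case: n' / E; rewrite castmx_id. Qed.

Lemma fdon_bij (P : {pred T}) n (h : 'I_n -> T) A :
  injective h -> (forall i, h i \in P) -> #|P| = n ->
  fdon P A = \det (\matrix_(a, b) A (h a) (h b)).
Proof.
move=> hinj hP hn.
pose s0 (a : 'I_#|P|) := enum_rank_in (enum_valP a) (h (cast_ord hn a)).
have s0E a : enum_val (s0 a) = h (cast_ord hn a).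
  by rewrite /s0 enum_rankK_in.
have s0inj : injective s0.
  move=> a b eab; have := s0E a; rewrite eab s0E => /hinj/cast_ord_inj.
  by [].
pose s := perm s0inj.
rewrite -(det_cast (esym hn)) /fdon -(det_conj s); congr (\det _).
apply/matrixP => i j; rewrite castmxE !mxE !permE !s0E.
by congr (A (h _) (h _)); apply: val_inj.
Qed.

Lemma fdon_eq (P P' : {pred T}) A B :
  P =i P' -> (forall x y, x \in P -> y \in P -> A x y = B x y) ->
  fdon P A = fdon P' B.
Proof.
move=> eP eAB; rewrite (@fdon_bij P' #|P| (@enum_val T P)).
- rewrite /fdon; congr (\det _); apply/matrixP => a b; rewrite !mxE.
  by rewrite eAB ?enum_valP.
- exact: enum_val_inj.
- by move=> i; rewrite -eP enum_valP.
- exact: eq_card.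
Qed.

Lemma fdon_id (P : {pred T}) A :
  (forall x y, x \in P -> y \in P -> A x y = (x == y)%:R) -> fdon P A = 1.
Proof.
move=> eA; rewrite /fdon -(@det1 C #|P|); congr (\det _).
apply/matrixP => a b; rewrite !mxE eA ?enum_valP //.
by rewrite (inj_eq enum_val_inj).
Qed.

Lemma split_lshift m n (a : 'I_m) : split (lshift n a) = inl a.
Proof. exact: (unsplitK (inl _ a)). Qed.
Lemma split_rshift m n (a : 'I_n) : split (rshift m a) = inr a.
Proof. exact: (unsplitK (inr _ a)). Qed.

Lemma fdon_split (P Q : {pred T}) A :
  (forall x y, x \in P -> y \in P -> x \in Q -> y \notin Q -> A x y = 0) ->
  fdon P A = fdon [predI P & Q] A * fdon [predD P & Q] A.
Proof.
move=> eA.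
pose h (i : 'I_(#|[predI P & Q]| + #|[predD P & Q]|)) : T :=
  match split i with
  | inl a => @enum_val T [predI P & Q] a
  | inr b => @enum_val T [predD P & Q] b end.
have hP i : h i \in P.
  rewrite /h; case: (split i) => a.
    by have := enum_valP a; rewrite inE => /andP[].
  by have := enum_valP a; rewrite inE => /andP[].
have hinj : injective h.
  move=> i j; rewrite /h; case: splitP => a Ei; case: splitP => b Ej.
  - by move/enum_val_inj => eab; apply: val_inj; rewrite /= Ei Ej eab.
  - move=> eab; have := enum_valP a; have := enum_valP b.
    by rewrite !inE eab => /andP[Qb _] /andP[_ Qa]; rewrite Qa in Qb.
  - move=> eab; have := enum_valP a; have := enum_valP b.
    by rewrite !inE eab => /andP[_ Qb] /andP[Qa _]; rewrite Qb in Qa.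
  - by move/enum_val_inj => eab; apply: val_inj; rewrite /= Ei Ej eab.
rewrite (@fdon_bij P _ h) //; last by rewrite cardID.
set M := \matrix_(a, b) _.
rewrite -(submxK M).
have -> : ursubmx M = 0.
  apply/matrixP => a b; rewrite !mxE /h split_lshift split_rshift.
  have := enum_valP a; have := enum_valP b; rewrite !inE.
  by move=> /andP[Qb Pb] /andP[Pa Qa]; rewrite eA.
rewrite det_lblock /fdon; congr (_ * _); congr (\det _).
  by apply/matrixP => a b; rewrite !mxE /h !split_lshift.
by apply/matrixP => a b; rewrite !mxE /h !split_rshift.
Qed.

Lemma fdon_part (K : finType) (f : T -> K) (S : {set K}) (P : {pred T}) A :
  (forall x, x \in P -> f x \in S) ->
  (forall x y, x \in P -> y \in P -> f x != f y -> A x y = 0) ->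
  fdon P A = \prod_(k in S) fdon [pred x | (x \in P) && (f x == k)] A.
Proof.
have [n] := ubnP #|S|; elim: n S P => // n IH S P /ltnSE leS hS hA.
case: (set_0Vmem S) => [S0 | [k0 k0S]].
  rewrite S0 big_set0; apply: fdon_id => x y xP.
  by have := hS x xP; rewrite S0 in_set0.
rewrite (fdon_split (Q := [pred x | f x == k0])); last first.
  move=> x y xP yP; rewrite !inE => /eqP fx ne; apply: hA => //.
  by rewrite fx eq_sym.
rewrite (bigD1 k0) //=; f_equal.
rewrite (IH (S :\ k0)).
- apply: eq_big => [k|k /setD1P[nk _]]; first by rewrite in_setD1 andbC.
  apply: fdon_eq => // x; rewrite !inE; case: (f x =P k) => [->|]; rewrite ?nk ?andbF //.
- by rewrite (cardsD1 k0) k0S in leS.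
- by move=> x; rewrite !inE => /andP[nx xP]; rewrite nx hS.
- move=> x y; rewrite !inE => /andP[_ xP] /andP[_ yP]; exact: hA.
Qed.

Definition mxof (T' : finType) (A : T -> T' -> C) : 'M[C]_(#|T|, #|T'|) :=
  \matrix_(a, b) A (enum_val a) (enum_val b).

Lemma sum_enum_val (F : T -> C) : \sum_(a < #|T|) F (enum_val a) = \sum_x F x.
Proof. by rewrite (big_enum_val F). Qed.

End Fdet.

Lemma mxof_mul (T1 T2 T3 : finType) (A : T1 -> T2 -> C) (B : T2 -> T3 -> C) :
  mxof A *m mxof B = mxof (fun x z => \sum_y A x y * B y z).
Proof.
apply/matrixP => a b; rewrite !mxE.
rewrite -(sum_enum_val (fun y => A (enum_val a) y * B y (enum_val b))).
by apply: eq_bigr => c _; rewrite !mxE.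
Qed.

Lemma mxofD (T1 T2 : finType) (A B : T1 -> T2 -> C) :
  mxof (fun x y => A x y + B x y) = mxof A + mxof B.
Proof. by apply/matrixP => a b; rewrite !mxE. Qed.

Lemma mxofB (T1 T2 : finType) (A B : T1 -> T2 -> C) :
  mxof (fun x y => A x y - B x y) = mxof A - mxof B.
Proof. by apply/matrixP => a b; rewrite !mxE. Qed.

Lemma mxof1 (T : finType) : mxof (fun x y : T => (x == y)%:R) = 1%:M.
Proof. by apply/matrixP => a b; rewrite !mxE (inj_eq enum_val_inj). Qed.

Lemma mxof_ext (T1 T2 : finType) (A B : T1 -> T2 -> C) :
  (forall x y, A x y = B x y) -> mxof A = mxof B.
Proof. by move=> eAB; apply/matrixP => a b; rewrite !mxE eAB. Qed.

Lemma fdon_bij2 (T : finType) (P : {pred T}) n (h : 'I_n -> T) A :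
  injective h -> (forall i, h i \in P) -> (forall x, x \in P -> exists i, h i = x) ->
  fdon P A = \det (\matrix_(a, b) A (h a) (h b)).
Proof.
move=> hinj hP hS; apply: fdon_bij => //.
rewrite -[n]card_ord -(card_codom hinj); apply: eq_card => x.
apply/idP/codomP => [/hS[i <-] | [i ->]]; last exact: hP.
by exists i.
Qed.

Lemma fdetE (T : finType) (A : T -> T -> C) : fdet A = \det (mxof A).
Proof. by []. Qed.

Lemma sylvester m n (A : 'M[C]_(m, n)) (B : 'M[C]_(n, m)) :
  \det (1%:M - A *m B) = \det (1%:M - B *m A).
Proof.
have e1 : block_mx 1%:M A B 1%:M
    = block_mx 1%:M 0 B 1%:M *m block_mx 1%:M A 0 (1%:M - B *m A).
  by rewrite mulmx_block !mul1mx !mul0mx !mulmx1 !addr0 addrC subrK.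
have e2 : block_mx 1%:M A B 1%:M
    = block_mx (1%:M - A *m B) A 0 1%:M *m block_mx 1%:M 0 B 1%:M.
  by rewrite mulmx_block !mul1mx !mul0mx !mulmx1 !mulmx0 !add0r subrK.
have := congr1 determinant e1; rewrite e2 !det_mulmx.
by rewrite !det_lblock !det_ublock !det1 !mul1r !mulr1.
Qed.

Lemma sum_sigT (I : finType) (J : I -> finType) (G : {i : I & J i} -> C) :
  \sum_p G p = \sum_i \sum_(j : J i) G (Tagged J j).
Proof.
rewrite (@sig_big_dep _ _ _ I J xpredT (fun _ => xpredT)
   (fun i j => G (Tagged J j))) /=.
by apply: eq_bigr => -[].
Qed.

Lemma mx_atE m n (A : 'M[C]_(m, n)) (i : 'I_m) (j : 'I_n) :
  mx_at A i j = A i j.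
Proof. by rewrite /mx_at !valK. Qed.

Lemma mx_at_mul m n p (A : 'M[C]_(m, n)) (B : 'M[C]_(n, p)) (i k : nat) :
  \sum_(c < n) mx_at A i c * mx_at B c k = mx_at (A *m B) i k.
Proof.
rewrite /mx_at; case: insubP => [i' _ ei|_]; case: insubP => [k' _ ek|_].
- by rewrite mxE; apply: eq_bigr => c _; rewrite valK.
- by apply: big1 => c _; rewrite valK mulr0.
- by apply: big1 => c _; rewrite mul0r.
- by apply: big1 => c _; rewrite mul0r.
Qed.

Lemma mx_atD m n (A B : 'M[C]_(m, n)) i j :
  mx_at (A + B) i j = mx_at A i j + mx_at B i j.
Proof.
rewrite /mx_at; case: (insub i : option 'I_m) => [a|]; case: (insub j : option 'I_n) => [b|];
  by rewrite ?mxE ?addr0.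
Qed.

Lemma mx_atB m n (A B : 'M[C]_(m, n)) i j :
  mx_at (A - B) i j = mx_at A i j - mx_at B i j.
Proof.
rewrite /mx_at; case: (insub i : option 'I_m) => [a|]; case: (insub j : option 'I_n) => [b|];
  by rewrite ?mxE ?subr0.
Qed.

Lemma mx_at_sum m n (I : finType) (P : pred I) (F : I -> 'M[C]_(m, n)) i j :
  mx_at (\sum_(k | P k) F k) i j = \sum_(k | P k) mx_at (F k) i j.
Proof.
rewrite /mx_at; case: (insub i : option 'I_m) => [a|];
  case: (insub j : option 'I_n) => [b|]; rewrite ?summxE //. all: symmetry; exact: big1.
Qed.

Lemma sum_delta n (a : nat) (F : nat -> C) : (a < n)%N ->
  \sum_(c < n) ((a == c)%:R * F c) = F a.
Proof.
move=> an; rewrite (bigD1 (Ordinal an)) //= eqxx mul1r.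
match goal with |- _ + ?S = _ => have -> : S = 0 end; last by rewrite addr0.
apply: big1 => c /negPf nc; case: eqP => [ea|]; last by rewrite mul0r.
by move: nc; rewrite -val_eqE /= ea eqxx.
Qed.

Section Push.
Variables (m n : nat) (A : 'M[C]_(m, n)) (B : 'M[C]_(n, m)).
Hypotheses (h1 : (1%:M - A *m B) \in unitmx) (h2 : (1%:M - B *m A) \in unitmx).

Lemma push : A *m invmx (1%:M - B *m A) = invmx (1%:M - A *m B) *m A.
Proof.
have e : (1%:M - A *m B) *m A = A *m (1%:M - B *m A).
  by rewrite mulmxBl mulmxBr mul1mx mulmx1 mulmxA.
transitivity (invmx (1%:M - A *m B) *m ((1%:M - A *m B) *m A)
              *m invmx (1%:M - B *m A)); first by rewrite mulKmx.
by rewrite e mulmxA mulmxK.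
Qed.

Lemma push_id1 :
  invmx (1%:M - A *m B) *m A - A *m (invmx (1%:M - B *m A) *m (B *m A)) = A.
Proof.
rewrite mulmxA push -mulmxA -mulmxBr.
have <- : (1%:M - A *m B) *m A = A - A *m (B *m A).
  by rewrite mulmxBl mul1mx mulmxA.
by rewrite mulKmx.
Qed.

Lemma push_id2 :
  A *m (invmx (1%:M - B *m A) *m B) = invmx (1%:M - A *m B) *m (A *m B).
Proof. by rewrite mulmxA push mulmxA. Qed.
End Push.

Section Graph.
Variables (V : finType) (adj : rel V).
Hypothesis adj_sym : symmetric adj.
Hypothesis adj_irr : irreflexive adj.
Variables (r : V -> nat) (u : forall i j : V, 'M[C]_(r j, r i)).
Hypothesis hinv : forall i j : V, adj i j -> (1%:M - u i j *m u j i) \in unitmx.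

Local Notation E := (dedge adj).
Local Notation X := (Ebasis adj r).
Local Notation Y := (Vbasis r).

Lemma revP (e : E) : adj (val e).2 (val e).1.
Proof. by rewrite adj_sym; exact: (valP e). Qed.

Definition rev (e : E) : E :=
  exist (fun p : V * V => adj p.1 p.2) ((val e).2, (val e).1) (revP e).

Lemma revK (e : E) : rev (rev e) = e.
Proof. by apply: val_inj; case: e => -[]. Qed.

Lemma org_term (e : E) : org e != term e.
Proof.
case: e => -[v w] H /=; rewrite /org /term /=; apply/eqP => evw.
by move: H; rewrite /= evw adj_irr.
Qed.

Lemma eq_rev (e e' : E) : (e' == rev e) = (org e' == term e) && (term e' == org e).
Proof. by case: e e' => -[v w] H [[v' w'] H']; rewrite -val_eqE /= xpair_eqE. Qed.

Definition fwde (e : E) : bool := (enum_rank (org e) < enum_rank (term e))%N.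

Lemma fwde_rev (e : E) : fwde (rev e) = ~~ fwde e.
Proof.
rewrite /fwde /org /term /= -leqNgt ltn_neqAle.
suff -> : (enum_rank (val e).2 != enum_rank (val e).1 :> nat) by [].
by rewrite val_eqE (inj_eq enum_rank_inj) eq_sym; exact: org_term.
Qed.

Lemma rev_neq (e : E) : rev e != e.
Proof. by apply/negP => /eqP/(congr1 fwde); rewrite fwde_rev; case: (fwde e). Qed.

Definition Jop (x y : X) : C :=
  if tag y == rev (tag x)
  then mx_at (u (org (tag x)) (term (tag x))) (tagged x) (tagged y) else 0.

Definition Tmat (x : X) (y : Y) : C :=
  if tag y == org (tag x)
  then mx_at (u (org (tag x)) (term (tag x))) (tagged x) (tagged y) else 0.

Definition Smat (y : Y) (x : X) : C :=
  if term (tag x) == tag y then ((tagged y : nat) == tagged x)%:R else 0.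

Definition Wm (e : E) : 'M[C]_(r (term e)) :=
  invmx (1%:M - u (org e) (term e) *m u (term e) (org e)).

Definition Pn (e : E) (k : nat) (y : Y) : C :=
  (if tag y == org e then mx_at (Wm e *m u (org e) (term e)) k (tagged y) else 0)
  - (if tag y == term e
     then mx_at (Wm e *m (u (org e) (term e) *m u (term e) (org e))) k (tagged y)
     else 0).

Definition Pmat (x : X) (y : Y) : C := Pn (tag x) (tagged x) y.

Definition Nop (x y : X) : C := (x == y)%:R + Jop x y.


Lemma sum_deltaT (T : finType) (x : T) (F : T -> C) :
  \sum_z (x == z)%:R * F z = F x.
Proof.
rewrite (bigD1 x) //= eqxx mul1r big1 ?addr0 // => z /negPf.
by rewrite eq_sym => ->; rewrite mul0r.
Qed.

Lemma sumJ (x : X) (G : X -> C) :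
  \sum_z Jop x z * G z =
  \sum_(c < r (org (tag x))) mx_at (u (org (tag x)) (term (tag x))) (tagged x) c
      * G (Tagged (fun e : E => 'I_(r (term e))) (c : 'I_(r (term (rev (tag x)))))).
Proof.
rewrite sum_sigT (bigD1 (rev (tag x))) //= [X in _ + X]big1 ?addr0.
  by apply: eq_bigr => c _; rewrite /Jop /= eqxx.
move=> e /negPf ne; apply: big1 => c _.
by rewrite /Jop /= ne mul0r.
Qed.

Lemma NP (x : X) (y : Y) : \sum_z Nop x z * Pmat z y = Tmat x y.
Proof.
rewrite /Nop; under eq_bigr => z _ do rewrite mulrDl.
rewrite big_split /= sum_deltaT sumJ.
case: x => -[[v w] H] a; case: y => j b.
rewrite /Pmat /Pn /Tmat /rev /Wm /org /term /=.
have Hwv : adj w v by rewrite adj_sym.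
have nvw : (v == w) = false by apply/negP => /eqP evw; have := H; rewrite /= evw adj_irr.
have h1 := hinv H; have h2 := hinv Hwv.
case: (j =P v) => [ejv | njv].
  subst j; rewrite nvw subr0.
  under eq_bigr => c _ do rewrite sub0r mulrN.
  rewrite sumrN mx_at_mul -mx_atB.
  by rewrite (push_id1 h1 h2).
case: (j =P w) => [ejw | njw].
  subst j; rewrite sub0r.
  under eq_bigr => c _ do rewrite subr0.
  by rewrite mx_at_mul (push_id2 h1 h2) addNr.
rewrite !subr0 add0r; apply: big1 => c _; by rewrite mulr0.
Qed.

Lemma TS (x y : X) : \sum_z Tmat x z * Smat z y =
  if term (tag y) == org (tag x)
  then mx_at (u (org (tag x)) (term (tag x))) (tagged x) (tagged y) else 0.
Proof.
rewrite sum_sigT (bigD1 (org (tag x))) //= [X in _ + X]big1 ?addr0; last first.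
  move=> j /negPf nj; apply: big1 => c _.
  by rewrite /Tmat /= nj mul0r.
rewrite /Tmat /Smat /=; case: y => -[[v' w'] H'] b /=.
rewrite {1 3}/term /=.
case: (w' =P org (tag x)) => [ew | nw]; last first.
  by apply: big1 => c _; rewrite mulr0.
under eq_bigr => c _ do rewrite eqxx mulrC eq_sym.
subst w'; exact: (@sum_delta (r (org (tag x))) b).
Qed.

Lemma IminusM (x y : X) :
  (x == y)%:R - edgeM u x y = Nop x y - \sum_z Tmat x z * Smat z y.
Proof.
rewrite TS /Nop /Jop /edgeM eq_rev.
case: (term (tag y) == org (tag x)); case: (org (tag y) == term (tag x)) => /=.
- by rewrite subr0 addrK.
- by rewrite addr0.
- by rewrite addr0.
- by rewrite addr0.
Qed.

Lemma sum_edge1 (i k : V) (H : adj k i) (G : E -> C) :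
  \sum_(e | (term e == i) && (org e == k)) G e
  = G (exist (fun p : V * V => adj p.1 p.2) (k, i) H).
Proof.
rewrite (big_pred1 (exist (fun p : V * V => adj p.1 p.2) (k, i) H)) //.
by move=> -[[v w] Hvw]; rewrite /term /org /= -val_eqE /= xpair_eqE andbC.
Qed.

Lemma sum_edge0 (i k : V) (H : ~~ adj k i) (G : E -> C) :
  \sum_(e | (term e == i) && (org e == k)) G e = 0.
Proof.
rewrite big_pred0 // => -[[v w] Hvw]; rewrite /term /org /=.
apply/negP => /andP[/eqP ew /eqP ev]; move: Hvw; rewrite /= ew ev.
by rewrite (negPf H).
Qed.

Lemma sum_in (i : V) (G : E -> C) (Gk : V -> C) :
  (forall k (H : adj k i), G (exist (fun p : V * V => adj p.1 p.2) (k, i) H) = Gk k) ->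
  \sum_(e | term e == i) G e = \sum_(k | adj k i) Gk k.
Proof.
move=> eG; rewrite (partition_big (fun e => org e) xpredT) //=.
rewrite [RHS]big_mkcond /=; apply: eq_bigr => k _.
case: (boolP (adj k i)) => Hk; first by rewrite (sum_edge1 Hk) eG.
exact: sum_edge0.
Qed.

Lemma SP (x y : Y) :
  \sum_z Smat x z * Pmat z y = Ahat adj u x y - Dhat adj u x y.
Proof.
case: x => i a; case: y => j b.
rewrite sum_sigT.
have step : forall e : E,
  \sum_(c : 'I_(r (term e)))
     Smat (Tagged (fun i => 'I_(r i)) a) (Tagged (fun e : E => 'I_(r (term e))) c)
     * Pmat (Tagged (fun e : E => 'I_(r (term e))) c) (Tagged (fun i => 'I_(r i)) b)
  = if term e == i then Pn e a (Tagged (fun i => 'I_(r i)) b) else 0.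
  move=> e; rewrite /Smat /Pmat /=; case: eqP => [ei|_]; last first.
    by apply: big1 => c _; rewrite mul0r.
  apply: (@sum_delta (r (term e)) a (fun c => Pn e c _)).
  by rewrite ei; exact: ltn_ord.
rewrite (eq_bigr _ (fun e _ => step e)) -big_mkcond /=.
rewrite /Pn /= sumrB; congr (_ - _).
  rewrite (@sum_in i _ (fun k => if j == k then
      mx_at (invmx (1%:M - u k i *m u i k) *m u k i) a b else 0)) //.
  rewrite -big_mkcondr /= /Ahat /Ablock /=.
  case: (boolP (adj j i)) => Hj.
    rewrite (big_pred1 j); first by rewrite mx_atE.
    move=> k /=; rewrite [j == k]eq_sym; case: (k =P j) => [->|_]; by rewrite ?Hj ?andbF.
  rewrite big_pred0 ?mxE // => k /=.
  by apply/negP => /andP[Hk /eqP ejk]; rewrite ejk Hk in Hj.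
rewrite /Dhat /=; case: (i =P j) => [eij | nij]; last first.
  apply: big1 => e /eqP ei; case: eqP => // ejt.
  by case: nij; rewrite -ei -ejt.
subst j; rewrite tagged_asE /Dblock summxE.
apply: (@sum_in i _ (fun k =>
  (invmx (1%:M - u k i *m u i k) *m (u k i *m u i k)) a b)) => k Hk.
by rewrite eqxx mx_atE.
Qed.

Definition fwd (x : X) : bool := fwde (tag x).
Definition Jp (x y : X) : C := if fwd y then Jop x y else 0.
Definition Jm (x y : X) : C := if fwd y then 0 else Jop x y.

Lemma Jop0 (x y : X) : fwd y = fwd x -> Jop x y = 0.
Proof.
move=> Fxy; rewrite /Jop; case: eqP => // ey; exfalso; move: Fxy.
by rewrite /fwd ey fwde_rev; case: (fwde (tag x)).
Qed.

Lemma JmJm (x y : X) : \sum_z Jm x z * Jm z y = 0.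
Proof.
apply: big1 => z _; rewrite /Jm.
case Fz: (fwd z); first by rewrite mul0r.
case Fy: (fwd y); first by rewrite mulr0.
by rewrite (@Jop0 z y) ?mulr0 // Fy Fz.
Qed.

Lemma Nop_split (x y : X) : Nop x y = (x == y)%:R + Jp x y + Jm x y.
Proof. by rewrite /Nop /Jp /Jm -addrA; case: (fwd y); rewrite ?addr0 ?add0r. Qed.

Lemma detF1 : fdet (fun x y : X => (x == y)%:R + Jm x y) = 1.
Proof.
rewrite fdet_fdon (fdon_split (Q := [pred x | ~~ fwd x])).
  rewrite !fdon_id ?mulr1 // => x y; rewrite !inE /=.
    by rewrite !negbK !andbT => _ Fy; rewrite /Jm Fy addr0.
  move=> /negPf Fx /negPf Fy; rewrite /Jm Fy Jop0 ?addr0 //.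
  by rewrite Fy Fx.
move=> x y _ _; rewrite !inE /= negbK => /negPf Fx Fy; rewrite /Jm Fy addr0.
by case: eqP => // exy; move: Fx; rewrite exy Fy.
Qed.

Definition F2 (x y : X) : C :=
  (x == y)%:R + Jp x y - \sum_z Jm x z * Jp z y.

Lemma sumJm (x : X) (G : X -> C) :
  \sum_z Jm x z * G z = \sum_z Jop x z * (if fwd z then 0 else G z).
Proof. by apply: eq_bigr => z _; rewrite /Jm; case: (fwd z); rewrite ?mul0r ?mulr0. Qed.

Lemma block (p1 p2 : V) (Hp : adj p1 p2) (Hr : (enum_rank p1 < enum_rank p2)%N) :
  fdon [pred x : X | fwd x && (val (tag x) == (p1, p2))] F2
  = \det (1%:M - u p1 p2 *m u p2 p1).
Proof.
pose e0 := exist (fun p : V * V => adj p.1 p.2) (p1, p2) Hp.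
have F0 : fwde e0 = true by [].
rewrite (@fdon_bij2 _ _ (r p2)
   (fun a => Tagged (fun e : E => 'I_(r (term e))) (a : 'I_(r (term e0))))).
- congr (\det _); apply/matrixP => a b; rewrite !mxE /F2 eq_Tagged /=.
  rewrite /Jp {1}/fwd /= F0 Jop0 // addr0 sumJm sumJ /=.
  congr (_ - _).
  apply: eq_bigr => c _; rewrite mx_atE /fwd /= fwde_rev F0 /=.
  by rewrite /Jop /= revK eqxx mx_atE.
- by move=> a b /eqP; rewrite eq_Tagged /= => /eqP.
- by move=> a; rewrite inE /fwd /= F0 eqxx.
move=> -[e c]; rewrite inE /= => /andP[_ /eqP ev].
have ee : e = e0 by apply: val_inj.
by subst e; exists c.
Qed.

Lemma sumJp0 (x y : X) : fwd y = false -> \sum_z Jm x z * Jp z y = 0.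
Proof. by move=> Fy; apply: big1 => z _; rewrite /Jp Fy mulr0. Qed.

Lemma detF2 : fdet F2 = \prod_(p : V * V | adj p.1 p.2 && (enum_rank p.1 < enum_rank p.2)%N)
        \det (1%:M - u p.1 p.2 *m u p.2 p.1).
Proof.
rewrite fdet_fdon (fdon_split (Q := [pred x | fwd x])); last first.
  move=> x y _ _; rewrite !inE /= => Fx /negPf Fy.
  rewrite /F2 sumJp0 // /Jp Fy subr0 addr0.
  by case: eqP => // exy; move: Fy; rewrite -exy Fx.
rewrite [fdon [predD _ & _] _]fdon_id ?mulr1; last first.
  move=> x y; rewrite !inE /= => _ /andP[/negPf Fy _].
  by rewrite /F2 sumJp0 // /Jp Fy subr0 addr0.
rewrite (fdon_part (f := fun x : X => val (tag x))
   (S := [set p : V * V | adj p.1 p.2 && (enum_rank p.1 < enum_rank p.2)%N])).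
- apply: eq_big => [p | [p1 p2] ]; first by rewrite inE.
  rewrite inE => /andP[Hp Hr] /=; rewrite -(block Hp Hr).
  by apply: fdon_eq => // x; rewrite !inE.
- move=> x; rewrite !inE /=; case: x => -[[v w] H] c /= Fx.
  by rewrite H.
move=> x y; rewrite !inE /= => Fx Fy ne.
have {}Fy : fwd y = true := Fy; have {}Fx : fwd x = true := Fx.
rewrite /F2 /Jp; rewrite Fy (@Jop0 x y); last by rewrite Fx Fy.
have -> : (x == y) = false.
  by apply/negbTE; apply: contra ne => /eqP ->.
rewrite add0r sub0r big1 ?oppr0 // => z _.
rewrite /Jm; case: (fwd z); first by rewrite mul0r.
rewrite /Jop; case: eqP => [ez|]; last by rewrite mul0r.
case: eqP => [ey|]; last by rewrite mulr0.
by exfalso; move: ne; rewrite ey ez revK eqxx.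
Qed.

Lemma detN : \det (mxof Nop) =
  \prod_(p : V * V | adj p.1 p.2 && (enum_rank p.1 < enum_rank p.2)%N)
        \det (1%:M - u p.1 p.2 *m u p.2 p.1).
Proof.
have J0 : mxof Jm *m mxof Jm = 0.
  rewrite mxof_mul; apply/matrixP => a b; rewrite !mxE; exact: JmJm.
have eF2 : mxof F2 = 1%:M + mxof Jp - mxof Jm *m mxof Jp.
  by rewrite mxof_mul -mxof1 -mxofD -mxofB.
have eN : mxof Nop = mxof (fun x y => (x == y)%:R + Jm x y) *m mxof F2.
  rewrite (mxof_ext Nop_split) eF2 !mxofD mxof1.
  rewrite mulmxDl mul1mx mulmxBr mulmxDr mulmx1 mulmxA J0 mul0mx subr0.
  by rewrite [mxof Jm + _]addrC addrA subrK.
by rewrite eN det_mulmx -!fdetE detF1 mul1r detF2.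
Qed.

Lemma main :
  Zinv adj u =
    fdet (fun x y : Y => (x == y)%:R + Dhat adj u x y - Ahat adj u x y)
    * \prod_(p : V * V | adj p.1 p.2 && (enum_rank p.1 < enum_rank p.2)%N)
        \det (1%:M - u p.1 p.2 *m u p.2 p.1).
Proof.
rewrite /Zinv fdetE.
have eM : mxof (fun x y => (x == y)%:R - edgeM u x y)
          = mxof Nop - mxof Tmat *m mxof Smat.
  by rewrite mxof_mul -mxofB; apply: mxof_ext => x y; exact: IminusM.
have eT : mxof Tmat = mxof Nop *m mxof Pmat.
  by rewrite mxof_mul; apply: mxof_ext => x y; rewrite NP.
rewrite eM eT -mulmxA -{1}(mulmx1 (mxof Nop)) -mulmxBr det_mulmx sylvester.
have eD : 1%:M - mxof Smat *m mxof Pmat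
          = mxof (fun x y : Y => (x == y)%:R + Dhat adj u x y - Ahat adj u x y).
  rewrite mxof_mul -mxof1 -mxofB; apply: mxof_ext => x y.
  by rewrite SP opprB addrA.
by rewrite eD -fdetE mulrC detN.
Qed.

End Graph.

Unset Implicit Arguments.
Set Strict Implicit.

Theorem corollary1 (V : finType) (adj : rel V)
    (adj_sym : symmetric adj) (adj_irr : irreflexive adj)
    (r : V -> nat) (r_pos : forall i, (0 < r i)%N)
    (u : forall i j : V, 'M[C]_(r j, r i))
    (hinv : forall i j : V, adj i j -> (1%:M - u i j *m u j i) \in unitmx) :
  Zinv adj u =
    fdet (fun x y : Vbasis r => (x == y)%:R + Dhat adj u x y - Ahat adj u x y)
    * \prod_(p : V * V | adj p.1 p.2 && (enum_rank p.1 < enum_rank p.2)%N)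
        \det (1%:M - u p.1 p.2 *m u p.2 p.1).
Proof. exact: (main adj_sym adj_irr hinv). Qed.
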